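(* Let $G$ be a finite Abelian group, let $S \subseteq G$ with $0 \notin S$, and let $\delta > 0$. If $\lambda(S) \geqslant (\delta - 1)|S|$, then $$\lambda\big(S \cup (-S)\big) \geqslant \Big(\frac{\delta}{2} - 1\Big)\,|S \cup (-S)|.$$
   Context: For $T \subseteq G$ with $0 \notin T$, $A(T)$ is the $G\times G$ $(0,1)$-matrix with $A(T)(x,y) = 1$ iff $y - x \in T$, and $\lambda(T) = \min\{\Re(\lambda) : A(T)v = \lambda v \text{ for some } v \neq \mathbf{0}\}$. The paper writes $\lambda(\mathcal{G}^*_S)$ for $\lambda(S\cup(-S))$, the smallest eigenvalue of the adjacency matrix $A(S\cup(-S))$ of the Cayley graph of $S$ (edges $xy$ with $x-y \in S$ or $y - x \in S$). *)

(* Defs.v *)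
(* Complex eigenvalues are taken in algC (algebraic complex
   numbers); eigenvalues of a (0,1)-matrix are algebraic, so nothing is lost. *)
From HB Require Import structures.
From mathcomp Require Import all_boot all_order all_algebra all_field.
Set Implicit Arguments. Unset Strict Implicit. Unset Printing Implicit Defensive.
Import Order.TTheory GRing.Theory Num.Theory.
Local Open Scope ring_scope.

Definition adjA (G : finZmodType) (T : {set G}) (x y : G) : algC :=
  if (y - x) \in T then 1 else 0.

Definition is_eigenvalue (G : finZmodType) (T : {set G}) (mu : algC) : Prop :=
  exists v : G -> algC, (exists x, v x != 0) /\
    forall x, \sum_(y : G) adjA T x y * v y = mu * v x.

Definition is_lambda (G : finZmodType) (T : {set G}) (l : algC) : Prop :=
  (exists mu, is_eigenvalue T mu /\ 'Re mu = l) /\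
  (forall mu, is_eigenvalue T mu -> l <= 'Re mu).

Definition symm (G : finZmodType) (S : {set G}) : {set G} :=
  S :|: [set - x | x in S].

(* Main.v *)
Require Import Defs.
From HB Require Import structures.
From mathcomp Require Import all_boot all_order all_algebra all_field.
From mathcomp Require Import ring.
Set Implicit Arguments. Unset Strict Implicit. Unset Printing Implicit Defensive.
Import Order.TTheory GRing.Theory Num.Theory.
Local Open Scope ring_scope.

Definition mxA (G : finZmodType) (T : {set G}) : 'M[algC]_#|G| :=
  \matrix_(i, j) adjA T (enum_val j) (enum_val i).
Definition rv (G : finZmodType) (f : G -> algC) : 'rV[algC]_#|G| :=
  \row_i f (enum_val i).
Definition fv (G : finZmodType) (v : 'rV[algC]_#|G|) : G -> algC :=
  fun x => v 0 (enum_rank x).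

Lemma sum_enum (G : finZmodType) (F : G -> algC) :
  \sum_(i < #|G|) F (enum_val i) = \sum_y F y.
Proof. by rewrite -(big_enum_val (A := predT)). Qed.

Lemma mul_rv (G : finZmodType) T (f : G -> algC) x :
  (rv f *m mxA T) 0 (enum_rank x) = \sum_y adjA T x y * f y.
Proof.
rewrite mxE -sum_enum; apply: eq_bigr => i _.
by rewrite !mxE enum_rankK mulrC.
Qed.

Lemma rvK (G : finZmodType) (f : G -> algC) : fv (rv f) =1 f.
Proof. by move=> x; rewrite /fv mxE enum_rankK. Qed.

Lemma fvK (G : finZmodType) (v : 'rV[algC]_#|G|) : rv (fv v) = v.
Proof. by apply/rowP => i; rewrite mxE /fv enum_valK. Qed.

Lemma eig_rv (G : finZmodType) (T : {set G}) (f : G -> algC) mu :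
  (forall x, \sum_(y : G) adjA T x y * f y = mu * f x) <->
  rv f *m mxA T = mu *: rv f.
Proof.
split=> [H|H x].
  apply/rowP => i; have -> : i = enum_rank (enum_val i) by rewrite enum_valK.
  by rewrite mul_rv H !mxE enum_rankK.
by rewrite -mul_rv H !mxE enum_rankK.
Qed.

Lemma comm_A (G : finZmodType) (S T : {set G}) :
  mxA S *m mxA T = mxA T *m mxA S.
Proof.
apply/matrixP => i j; rewrite !mxE.
under eq_bigr do rewrite !mxE.
under [RHS]eq_bigr do rewrite !mxE.
set a := enum_val i; set c := enum_val j.
rewrite (sum_enum (fun z => adjA S z a * adjA T c z)).
rewrite (sum_enum (fun z => adjA T z a * adjA S c z)).
rewrite (reindex_inj (inj_comp (addrI (a + c)) oppr_inj)) /=.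
apply: eq_bigr => z _; rewrite mulrC /adjA.
have -> : a + c - z - c = a - z by rewrite (addrAC _ (- z)) addrK.
by have -> : a - (a + c - z) = z - c by rewrite !opprD opprK !addrA subrr add0r addrC.
Qed.

Lemma count_A (G : finZmodType) (R : {set G}) y :
  \sum_x adjA R x y = #|R|%:R.
Proof.
rewrite (reindex_inj (inj_comp (addrI y) oppr_inj)) /=.
under eq_bigr do rewrite /adjA subKr.
by rewrite -big_mkcond /= sumr_const.
Qed.

Lemma norm_bound (G : finZmodType) (R : {set G}) (f : G -> algC) nu :
  (exists x, f x != 0) -> (forall x, \sum_y adjA R x y * f y = nu * f x) ->
  `|nu| <= #|R|%:R.
Proof.
move=> [x0 fx0] H.
set N := \sum_y `|f y|.
have Npos : 0 < N.
  rewrite /N (bigD1 x0) //=; apply: (@lt_le_trans _ _ `|f x0|).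
    by rewrite normr_gt0.
  by rewrite lerDl sumr_ge0.
rewrite -(ler_pM2r Npos).
have -> : `|nu| * N = \sum_x `|\sum_y adjA R x y * f y|.
  by rewrite /N mulr_sumr; apply: eq_bigr => x _; rewrite H normrM.
apply: (le_trans (y := \sum_x \sum_y adjA R x y * `|f y|)).
  apply: ler_sum => x _; apply: (le_trans (ler_norm_sum _ _ _)).
  apply: ler_sum => y _; rewrite normrM /adjA.
  by case: ifP; rewrite ?normr1 ?normr0.
rewrite exchange_big /= /N mulr_sumr; apply: ler_sum => y _.
by rewrite -mulr_suml count_A.
Qed.

Lemma Re_lb (z : algC) : - `|z| <= 'Re z.
Proof.
rewrite lerNl; have [h _] := leif_normC_Re_Creal z.
apply: le_trans h; have := real_ler_normr (- 'Re z) (Creal_Re z).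
by rewrite lexx orbT => ->.
Qed.

Theorem lemma7p13 (G : finZmodType) (S : {set G}) (delta : algC)
  (lS lSS : algC) :
  0 \notin S -> 0 < delta ->
  is_lambda S lS -> is_lambda (symm S) lSS ->
  (delta - 1) * #|S|%:R <= lS ->
  (delta / 2 - 1) * #|symm S|%:R <= lSS.
Proof.
move=> _ dpos [_ minS] [[mu [emu <-]] _] hS.
set T := symm S; set R := T :\: S.
have ST : S \subset T by rewrite subsetUl.
have cardT : #|T| = (#|S| + #|R|)%N.
  by rewrite -(cardsID S T) (setIidPr ST).
have RS : (#|R| <= #|S|)%N.
  apply: leq_trans (leq_imset_card (fun x => - x) S).
  apply: subset_leq_card; apply/subsetP => x.
  by rewrite /R /T /symm in_setD in_setU => /andP[/negPf -> /=].
case: emu => f [[x0 fx0] Hf]; move/eig_rv: Hf => Hv.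
have mu_eig : eigenvalue (mxA T) mu.
  apply/eigenvalueP; exists (rv f) => //.
  apply: contra fx0 => /eqP /rowP /(_ (enum_rank x0)).
  by rewrite !mxE enum_rankK => ->.
set E := eigenspace (mxA T) mu.
have rE : (0 < \rank E)%N by rewrite lt0n mxrank_eq0.
have stE : stablemx E (mxA S) by apply: comm_mx_stable_eigenspace; exact: comm_A.
have [a ea] := eigenvalue_closed (conjmx (row_base E) (mxA S)) rE.
have [w' w'eq w'0] := eigenvalueP ea.
have stw' : stablemx w' (conjmx (row_base E) (mxA S)).
  by apply/eigenvectorP; exists a; apply/eigenspaceP.
rewrite (stablemx_restrict _ stE) in stw'.
set w := w' *m row_base E.
have w0 : w != 0 by rewrite mulmx_free_eq0 ?row_base_free.
have wE : (w <= E)%MS by rewrite mulmx_sub // eq_row_base.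
have wT : w *m mxA T = mu *: w by apply/eigenspaceP.
have [b /eigenspaceP wS] := eigenvectorP _ stw'.
set g := fv w; have rg : rv g = w := fvK w.
have gnz : exists x, g x != 0.
  have /existsP [x gx] : [exists x, g x != 0]; last by exists x.
  apply: contraNT w0 => /existsPn H; apply/eqP/rowP => i; rewrite [RHS]mxE.
  by move: (H (enum_val i)); rewrite /g /fv enum_valK => /negPn/eqP.
have eS : forall x, \sum_y adjA S x y * g y = b * g x by apply/eig_rv; rewrite rg.
have eT : forall x, \sum_y adjA T x y * g y = mu * g x by apply/eig_rv; rewrite rg.
have eR : forall x, \sum_y adjA R x y * g y = (mu - b) * g x.
  move=> x; rewrite mulrBl -eT -eS -sumrB; apply: eq_bigr => y _.
  rewrite -mulrBl /adjA /R in_setD.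
  case: (boolP (y - x \in S)) => /= yS.
    by rewrite (subsetP ST _ yS) subrr mul0r.
  by rewrite subr0.
have nb := norm_bound gnz eR.
have Reb : lS <= 'Re b by apply: minS; exists g; split.
have Hr : - (#|R|%:R) <= 'Re (mu - b).
  by apply: le_trans (Re_lb _); rewrite lerN2.
have -> : 'Re mu = 'Re b + 'Re (mu - b) by rewrite -raddfD /= addrC subrK.
rewrite cardT natrD.
set s : algC := #|S|%:R; set r : algC := #|R|%:R.
have key : (delta / 2 - 1) * (s + r) = (delta - 1) * s - r - delta / 2 * (s - r).
  by field.
rewrite key; apply: (le_trans (y := (delta - 1) * s - r)).
  rewrite lerBlDr lerDl; apply: mulr_ge0.
    by apply: divr_ge0; [exact: ltW | exact: ler0n].
  by rewrite subr_ge0 /s /r ler_nat.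
by apply: lerD => //; apply: le_trans hS Reb.
Qed.
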